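(* Let $n\geq1$ and let $H$ be an irreducible subgroup of $SL(n,\mathbb{C})$. Then $|Z_n(H)|$ divides $n^2$. Moreover, $Z_n(H)$ is an irreducible subgroup of $PSL(n,\mathbb{C})$ if and only if $|Z_n(H)|=n^2$.
   Context: Let $\xi=e^{2\pi i/n}$; the center of $SL(n,\mathbb{C})$ is $\langle \xi I_n\rangle$, and $\pi_n:SL(n,\mathbb{C})\to PSL(n,\mathbb{C})$ is the quotient map. A subgroup $H\le SL(n,\mathbb{C})$ is irreducible if no nonzero proper subspace of $\mathbb{C}^n$ is $H$-invariant; a subgroup of $PSL(n,\mathbb{C})$ is irreducible if its preimage under $\pi_n$ is. $Z_n(H)$ denotes the centralizer of $\pi_n(H)$ in $PSL(n,\mathbb{C})$. *)

(* Defs.v *)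
(* The complex field C is modelled by an arbitrary
   numClosedFieldType (algebraically closed, characteristic 0). *)
From HB Require Import structures.
From mathcomp Require Import all_boot all_order all_algebra.
Set Implicit Arguments. Unset Strict Implicit. Unset Printing Implicit Defensive.
Import Order.TTheory GRing.Theory Num.Theory.
Local Open Scope ring_scope.

Definition subgroupSL (C : numClosedFieldType) (n : nat) (H : 'M[C]_n -> Prop) :=
  [/\ H 1%:M,
      (forall g h, H g -> H h -> H (g *m h)),
      (forall g, H g -> g \in unitmx /\ H (invmx g)) &
      (forall g, H g -> \det g = 1)].

(* pi_n g = pi_n g' : g' = z g with z I_n central, i.e. z^n = 1. *)
Definition projeq (C : numClosedFieldType) (n : nat) (g g' : 'M[C]_n) : Prop :=
  exists z : C, z ^+ n = 1 /\ g' = z *: g.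

(* Preimage in SL(n,C) of Z_n(H), the centralizer of pi_n(H) in PSL(n,C):
   g in SL(n,C) with g h g^-1 h^-1 central for every h in H. *)
Definition ZnPre (C : numClosedFieldType) (n : nat) (H : 'M[C]_n -> Prop)
  (g : 'M[C]_n) : Prop :=
  \det g = 1 /\
  forall h, H h -> exists z : C, z ^+ n = 1 /\ g *m h = z *: (h *m g).

(* Irreducibility of a set S of matrices acting on column vectors C^n:
   every S-invariant subspace (spanned by the rows of U, viewed as column
   vectors; the image of u under g has row u *m g^T) is 0 or C^n. *)
Definition irreducibleS (C : numClosedFieldType) (n : nat) (S : 'M[C]_n -> Prop) :=
  forall U : 'M[C]_n, (forall g, S g -> (U *m g^T <= U)%MS) ->
    \rank U = 0%N \/ \rank U = n.

(* The set of pi_n-classes of elements satisfying P has exactly k elements: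
   there is a list of k pairwise non-equivalent representatives in P
   covering every element of P. *)
Definition num_classes (C : numClosedFieldType) (n : nat) (P : 'M[C]_n -> Prop)
  (k : nat) : Prop :=
  exists s : seq 'M[C]_n,
    [/\ size s = k,
        (forall g, g \in s -> P g),
        (forall i j, (i < k)%N -> (j < k)%N ->
           projeq (nth 0 s i) (nth 0 s j) -> i = j) &
        (forall g, P g -> exists2 g', g' \in s & projeq g' g)].

(* Main.v *)
From HB Require Import structures.
Require Import Defs.
From mathcomp Require Import all_boot all_order all_algebra.
From mathcomp Require Import zify.
From mathcomp Require Import ring.
From Stdlib Require Import Classical ClassicalEpsilon.
Set Warnings "-notation-overridden,-ambiguous-paths".
Set Implicit Arguments. Unset Strict Implicit. Unset Printing Implicit Defensive.
Import Order.TTheory GRing.Theory Num.Theory.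
Local Open Scope ring_scope.

Lemma trace_idem (F : fieldType) N (P : 'M[F]_N) : P *m P = P -> \tr P = (\rank P)%:R.
Proof.
move=> PP.
have := mulmx_base P; have := col_base_full P; have := row_base_free P.
move: (col_base P) (row_base P) => Cb Rb Rf Cf PE.
have e1 : Rb *m Cb *m Rb = Rb.
  apply: (row_full_inj Cf).
  by rewrite !mulmxA PE -mulmxA PE.
have e2 : Rb *m Cb = 1%:M.
  apply: (row_free_inj Rf).
  by rewrite e1 mul1mx.
by rewrite -{1}PE mxtrace_mulC e2 mxtrace1.
Qed.

Lemma trace_lin (F : fieldType) n (f : {linear 'M[F]_n -> 'M[F]_n}) :
  \tr (lin_mx f) = \sum_i \sum_j f (delta_mx i j) i j.
Proof.
rewrite /mxtrace (reindex _ (curry_mxvec_bij _ _)) /= pair_bigA /=.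
apply: eq_bigr => [[i j]] _ /=.
by rewrite mxE /= -mxvec_delta mxvecK mxvecE.
Qed.
Lemma schur (C : numClosedFieldType) n (S : 'M[C]_n -> Prop) (X : 'M[C]_n) :
  (0 < n)%N -> irreducibleS S -> (forall g, S g -> X *m g = g *m X) ->
  exists a, X = a%:M.
Proof.
move=> n0 irr com.
have : size (char_poly X^T) != 1%N by rewrite size_char_poly; case: n n0 {S irr com X}.
case/closed_rootP => a; rewrite -eigenvalue_root_char => ev.
exists a.
have BE : X^T - a%:M = (X - a%:M)^T by rewrite linearB /= tr_scalar_mx.
have comB : forall g, S g -> (X - a%:M) *m g = g *m (X - a%:M).
  by move=> g Sg; rewrite mulmxBl mulmxBr com // scalar_mxC.
have inv : forall g, S g -> (eigenspace X^T a *m g^T <= eigenspace X^T a)%MS.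
  move=> g Sg; apply/sub_kermxP.
  rewrite BE -mulmxA -trmx_mul comB // trmx_mul mulmxA.
  by have /sub_kermxP := submx_refl (eigenspace X^T a); rewrite BE => ->; rewrite mul0mx.
case: (irr _ inv) => rk.
  by move: ev; rewrite /eigenvalue -mxrank_eq0 rk.
have : \rank (X - a%:M)^T = 0%N.
  by move: rk; rewrite /eigenspace BE mxrank_ker; case: (\rank _) (rank_leq_row ((X - a%:M)^T)) => // r; lia.
rewrite mxrank_tr => /eqP; rewrite mxrank_eq0 subr_eq0 => /eqP //.
Qed.

Lemma invmx_mul (F : fieldType) n (A B : 'M[F]_n) : A \in unitmx -> B \in unitmx ->
  invmx (A *m B) = invmx B *m invmx A.
Proof.
move=> uA uB; have uC : A *m B \in unitmx by rewrite unitmx_mul uA uB.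
have e : A *m B *m (invmx B *m invmx A) = 1%:M by rewrite mulmxA (mulmxK uB) (mulmxV uA).
by rewrite -[RHS](mulKmx uC) e mulmx1.
Qed.

Definition Mg (F : fieldType) n (g : 'M[F]_n) := lin_mx (mulmxr (invmx g) \o mulmx g).

Lemma MgE (F : fieldType) n (g X : 'M[F]_n) : mxvec X *m Mg g = mxvec (g *m X *m invmx g).
Proof. by rewrite /Mg mul_vec_lin. Qed.

Lemma mx_vec_eq (F : fieldType) n (A B : 'M[F]_(n * n)) :
  (forall X : 'M[F]_n, mxvec X *m A = mxvec X *m B) -> A = B.
Proof. move=> e; apply/row_matrixP => a; rewrite !rowE -[delta_mx 0 a]vec_mxK; exact: e. Qed.

Lemma Mg_mul (F : fieldType) n (g g' : 'M[F]_n) : g \in unitmx -> g' \in unitmx ->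
  Mg g *m Mg g' = Mg (g' *m g).
Proof.
move=> u u'; apply: mx_vec_eq => X.
by rewrite mulmxA !MgE invmx_mul // !mulmxA.
Qed.

Lemma MgZ (F : fieldType) n (g : 'M[F]_n) z : g \in unitmx -> z != 0 -> Mg (z *: g) = Mg g.
Proof.
move=> u z0; apply: mx_vec_eq => X.
have uz : z *: g \in unitmx by rewrite unitmxE detZ unitrM -unitmxE u andbT unitrX // unitfE.
by rewrite !MgE invmxZ // -!scalemxAl -scalemxAr scalerA mulfV // scale1r.
Qed.

Lemma trMg (F : fieldType) n (g : 'M[F]_n) : \tr (Mg g) = \tr g * \tr (invmx g).
Proof.
rewrite /Mg trace_lin /mxtrace big_distrl /=; apply: eq_bigr => i _.
rewrite big_distrr /=; apply: eq_bigr => j _.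
rewrite -(mul_delta_mx (0 : 'I_1)) !mulmxA -[_ *m invmx g]mulmxA -colE -rowE.
by rewrite mxE big_ord1 !mxE.
Qed.

Section Main.
Variables (C : numClosedFieldType) (n : nat) (H : 'M[C]_n -> Prop).
Hypotheses (n0 : (0 < n)%N) (sg : subgroupSL H) (irrH : irreducibleS H).
Implicit Types g h : 'M[C]_n.

Lemma zn0 (z : C) : z ^+ n = 1 -> z != 0.
Proof. by move=> e; apply/eqP => z0; move: e; rewrite z0 expr0n; case: n n0 => // m _ /eqP; rewrite eq_sym oner_eq0. Qed.

Lemma Hunit h : H h -> h \in unitmx.
Proof. by case: sg => _ _ Hi _ Hh; case: (Hi h Hh). Qed.

Lemma Zunit g : ZnPre H g -> g \in unitmx.
Proof. by case=> d _; rewrite unitmxE d unitr1. Qed.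

Lemma Z1 : ZnPre H 1%:M.
Proof. by split; [exact: det1 | move=> h _; exists 1; rewrite expr1n mul1mx mulmx1 scale1r]. Qed.

Lemma ZM g g' : ZnPre H g -> ZnPre H g' -> ZnPre H (g *m g').
Proof.
case=> d1 c1 [d2 c2]; split; first by rewrite det_mulmx d1 d2 mulr1.
move=> h Hh; case: (c1 h Hh) => z [zn e]; case: (c2 h Hh) => z' [zn' e'].
exists (z * z'); split; first by rewrite exprMn zn zn' mulr1.
rewrite -mulmxA e' -scalemxAr [g *m (h *m g')]mulmxA e -scalemxAl scalerA mulrC !mulmxA //.
Qed.

Lemma pe_refl g : projeq g g.
Proof. by exists 1; rewrite expr1n scale1r. Qed.

Lemma pe_sym g g' : projeq g g' -> projeq g' g.
Proof.
case=> z [zn ->]; exists z^-1; split; first by rewrite exprVn zn invr1.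
by rewrite scalerA mulVf ?scale1r // zn0.
Qed.

Lemma pe_trans g g' g'' : projeq g g' -> projeq g' g'' -> projeq g g''.
Proof.
case=> z [zn ->] [w [wn ->]]; exists (w * z); split; first by rewrite exprMn zn wn mulr1.
by rewrite scalerA.
Qed.

Lemma pe_cancel g (a b : 'M[C]_n) : g \in unitmx -> projeq (g *m a) (g *m b) -> projeq a b.
Proof.
move=> u [z [zn e]]; exists z; split => //.
by rewrite -(mulKmx u b) e -scalemxAr mulKmx.
Qed.

Lemma hig g h z : g \in unitmx -> g *m h = z *: (h *m g) ->
  h *m invmx g = z *: (invmx g *m h).
Proof.
move=> u e.
by rewrite -[h in LHS](mulKmx u) e -scalemxAr -scalemxAl mulmxA (mulmxK u).
Qed.

Lemma pe_of_chars g g' : ZnPre H g -> ZnPre H g' ->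
  (forall h, H h -> exists z, g *m h = z *: (h *m g) /\ g' *m h = z *: (h *m g')) ->
  projeq g g'.
Proof.
move=> Zg Zg' com.
have ug := Zunit Zg.
have [a ea] : exists a, invmx g *m g' = a%:M.
  apply: (schur n0 irrH) => h Hh.
  case: (com h Hh) => z [e e'].
  by rewrite -mulmxA e' -scalemxAr mulmxA [RHS]mulmxA (hig ug e) -scalemxAl.
have eg : g' = a *: g by rewrite -(mulKVmx ug g') ea mul_mx_scalar.
exists a; split => //.
by case: Zg' => d' _; case: Zg => d _; move: d'; rewrite eg detZ d mulr1.
Qed.

Lemma orth g g' : ZnPre H g -> ZnPre H g' -> ~ projeq g g' -> \tr (invmx g *m g') = 0.
Proof.
move=> Zg Zg' np; case: (eqVneq (\tr (invmx g *m g')) 0) => // t0; exfalso; apply: np.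
apply: pe_of_chars => // h Hh.
have ug := Zunit Zg; have uh := Hunit Hh.
case: Zg => _ /(_ h Hh) [z [_ e]]; case: Zg' => _ /(_ h Hh) [z' [_ e']].
exists z; split => //.
set Y := invmx g *m g'.
have eY : z *: (Y *m h) = z' *: (h *m Y).
  rewrite /Y -mulmxA e' -scalemxAr.
  by rewrite [h *m (_ *m _)]mulmxA (hig ug e) -scalemxAl !scalerA mulrC mulmxA.
have eT : z * \tr Y = z' * \tr Y.
  have := congr1 (fun M => \tr (invmx h *m M)) eY => /=.
  rewrite -!scalemxAr !mxtraceZ mulmxA (mulKmx uh) mxtrace_mulC mulmxA (mulmxV uh) mul1mx.
  by move=> ->.
have zz : z = z'.
  by apply/eqP; rewrite -subr_eq0; move/eqP: eT; rewrite -subr_eq0 -mulrBl mulf_eq0 (negPf t0) orbF.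
by rewrite zz.
Qed.


Definition good (s : seq 'M[C]_n) :=
  (forall g, g \in s -> ZnPre H g) /\
  (forall i j, (i < size s)%N -> (j < size s)%N -> projeq (nth 0 s i) (nth 0 s j) -> i = j).

Definition smat (s : seq 'M[C]_n) : 'M[C]_(size s, n * n) :=
  \matrix_(i < size s) mxvec (nth 0 s i).

Lemma smat_mul s (v : 'rV_(size s)) :
  v *m smat s = mxvec (\sum_(i < size s) v 0 i *: nth 0 s i).
Proof.
rewrite mulmx_sum_row linear_sum; apply: eq_bigr => i _.
by rewrite linearZ /= rowK.
Qed.

Lemma good_free s : good s -> row_free (smat s).
Proof.
case=> sZ sd; apply: inj_row_free => v; rewrite smat_mul => e0.
have e1 : \sum_(i < size s) v 0 i *: nth 0 s i = 0.
  by apply: (can_inj mxvecK); rewrite e0 linear0.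
apply/rowP => j; rewrite mxE.
have Zj : ZnPre H (nth 0 s j) by apply: sZ; rewrite mem_nth.
have := congr1 (fun M => \tr (invmx (nth 0 s j) *m M)) e1 => /=.
rewrite mulmx0 mxtrace0 mulmx_sumr raddf_sum (bigD1 j) //= big1.
  rewrite addr0 -scalemxAr mxtraceZ mulVmx ?Zunit // mxtrace1 => /eqP.
  by rewrite mulf_eq0 pnatr_eq0 (negPf (lt0n_neq0 n0)) orbF => /eqP.
move=> i ij; rewrite -scalemxAr mxtraceZ orth ?mulr0 //.
  by apply: sZ; rewrite mem_nth.
by move=> pe; move: ij; rewrite -(inj_eq val_inj) /= (sd _ _ (ltn_ord j) (ltn_ord i) pe) eqxx.
Qed.

Lemma good_size s : good s -> (size s <= n * n)%N.
Proof. by move=> gs; have := rank_leq_col (smat s); rewrite (eqP (good_free gs)). Qed.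

Lemma good_rcons s g : good s -> ZnPre H g -> ~ (exists2 g', g' \in s & projeq g' g) ->
  good (rcons s g).
Proof.
case=> sZ sd Zg nc; split.
  by move=> x; rewrite mem_rcons in_cons => /orP [/eqP -> // | /sZ].
rewrite size_rcons => i j; rewrite !ltnS !nth_rcons => hi hj.
case: (ltnP i (size s)) => ci; case: (ltnP j (size s)) => cj.
- exact: sd.
- have ej : j = size s by lia.
  rewrite ej eqxx => pe; exfalso; apply: nc; exists (nth 0 s i) => //; exact: mem_nth.
- have ei : i = size s by lia.
  rewrite ei eqxx => /pe_sym pe; exfalso; apply: nc; exists (nth 0 s j) => //; exact: mem_nth.
- lia.
Qed.

Lemma exists_max : exists s, good s /\
  forall g, ZnPre H g -> exists2 g', g' \in s & projeq g' g.
Proof.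
suff: forall d s, good s -> (n * n - size s <= d)%N -> exists s', good s' /\
  forall g, ZnPre H g -> exists2 g', g' \in s' & projeq g' g.
  move=> /(_ (n * n)%N [::]); apply; [by split => // i j | by rewrite subn0].
elim=> [|d IH] s gs hd;
  (case: (classic (forall g, ZnPre H g -> exists2 g', g' \in s & projeq g' g)) => [cov|ncov];
    first by exists s);
  (have [g [Zg ng]] : exists g, ZnPre H g /\ ~ (exists2 g', g' \in s & projeq g' g)
    by apply: NNPP => c; apply: ncov => g Zg; apply: NNPP => c2; apply: c; exists g);
  have gr := good_rcons gs Zg ng; have := good_size gr; rewrite size_rcons => hs.
  by exfalso; lia.
by apply: (IH _ gr); rewrite size_rcons; lia.
Qed.


Lemma main_sec : exists k : nat,
    [/\ num_classes (ZnPre H) k,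
        (k %| n ^ 2)%N &
        (irreducibleS (ZnPre H) <-> k = (n ^ 2)%N)].
Proof.
have [s [[sZ sd] cov]] := exists_max.
have gs : good s := conj sZ sd.
set k := size s.
have idx : forall g, ZnPre H g -> exists i : 'I_k, projeq (nth 0 s i) g.
  move=> g Zg; case: (cov g Zg) => g' g's pe.
  have hi : (index g' s < k)%N by rewrite index_mem.
  by exists (Ordinal hi); rewrite /= nth_index.
have sdi : forall i j : 'I_k, projeq (nth 0 s i) (nth 0 s j) -> i = j.
  by move=> i j pe; apply: val_inj; exact: (sd _ _ (ltn_ord i) (ltn_ord j) pe).
pose Phi := \sum_(i < k) Mg (nth 0 s i).
have PhiM : forall g, ZnPre H g -> Phi *m Mg g = Phi.
  move=> g Zg.
  have ex : forall i : 'I_k, exists m : 'I_k, projeq (nth 0 s m) (g *m nth 0 s i).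
    by move=> i; apply: idx; apply: ZM => //; apply: sZ; exact: mem_nth.
  pose f i := proj1_sig (constructive_indefinite_description _ (ex i)).
  have fP : forall i, projeq (nth 0 s (f i)) (g *m nth 0 s i) :=
    fun i => proj2_sig (constructive_indefinite_description _ (ex i)).
  have finj : injective f.
    move=> i i' e; apply: sdi; apply: (pe_cancel (Zunit Zg)).
    apply: pe_trans (pe_sym (fP i)) _; rewrite e; exact: fP.
  rewrite /Phi mulmx_suml [RHS](reindex_inj finj); apply: eq_bigr => i _.
  have Zi : ZnPre H (nth 0 s i) by apply: sZ; exact: mem_nth.
  rewrite Mg_mul ?Zunit //.
  case: (fP i) => z [zn ->]; rewrite MgZ ?zn0 //.
  by apply: Zunit; apply: sZ; exact: mem_nth.
have PhiPhi : Phi *m Phi = Phi *+ k.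
  rewrite {2}/Phi mulmx_sumr (eq_bigr (fun _ => Phi)) => [|i _]; last first.
    by apply: PhiM; apply: sZ; exact: mem_nth.
  by rewrite sumr_const card_ord.
have kpos : (0 < k)%N.
  by case: (idx _ Z1) => i _; exact: (leq_ltn_trans (leq0n i) (ltn_ord i)).
have k0 : (k%:R : C) != 0 by rewrite pnatr_eq0 -lt0n.
pose P := (k%:R : C)^-1 *: Phi.
have PP : P *m P = P.
  rewrite /P -scalemxAl -scalemxAr PhiPhi -scaler_nat !scalerA.
  by rewrite -mulrA mulVf // mulr1.
have PM : forall g, ZnPre H g -> P *m Mg g = P.
  by move=> g Zg; rewrite /P -scalemxAl PhiM.
have trPhi : \tr Phi = (n * n)%:R.
  case: (idx _ Z1) => i0 pe0.
  rewrite /Phi raddf_sum (bigD1 i0) //= big1 ?addr0.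
    have [w [wn ew]] := pe_sym pe0.
    rewrite ew scalemx1 trMg invmx_scalar !mxtrace_scalar natrM.
    have w0 := zn0 wn.
    rewrite -[w *+ n]mulr_natr -[w^-1 *+ n]mulr_natr; field; exact: w0.
  move=> i ii0; rewrite trMg.
  have : \tr (invmx 1%:M *m nth 0 s i) = 0.
    apply: orth => //; first exact: Z1; first by apply: sZ; exact: mem_nth.
    by move=> pe; move: ii0; rewrite (sdi _ _ (pe_trans pe0 pe)) eqxx.
  by rewrite invmx1 mul1mx => ->; rewrite mul0r.
have rkP : (n * n = k * \rank P)%N.
  have e : ((\rank P)%:R : C) = (k%:R)^-1 * (n * n)%:R.
    by rewrite -trace_idem // [in LHS]/P mxtraceZ trPhi.
  by apply/eqP; rewrite -(eqr_nat C) [(k * _)%:R]natrM e mulrA mulfV // mul1r.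
exists k; split.
- by exists s; split.
- by rewrite -mulnn rkP dvdn_mulr.
split.
- move=> irrZ.
  have r1 : (\rank P <= 1)%N.
    have sub : (P <= mxvec (1%:M : 'M[C]_n))%MS.
      apply/row_subP => a; rewrite rowE.
      have [y ey] : exists y, vec_mx (delta_mx 0 a *m P) = y%:M.
        apply: (schur n0 irrZ) => g Zg.
        have : mxvec (vec_mx (delta_mx 0 a *m P)) *m Mg g = mxvec (vec_mx (delta_mx 0 a *m P)).
          by rewrite vec_mxK -mulmxA PM.
        rewrite MgE => /(can_inj mxvecK) eY.
        by rewrite -{1}eY (mulmxKV (Zunit Zg)).
      rewrite -[_ *m P]vec_mxK ey -scalemx1 linearZ /=; apply: scalemx_sub; exact: submx_refl.
    by apply: leq_trans (mxrankS sub) (rank_leq_row _).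
  rewrite -mulnn; move: rkP r1; case: (\rank P) => [|[|r]] //.
    by rewrite muln0 => /eqP; rewrite muln_eq0 orbb (negPf (lt0n_neq0 n0)).
  by rewrite muln1.
- move=> hk U inv.
  have full : row_full (smat s).
    by rewrite /row_full (eqP (good_free gs)) -/k hk mulnn.
  have span : forall X : 'M[C]_n, (U *m X^T <= U)%MS.
    move=> X; have /submxP [a ea] := submx_full (mxvec X) full.
    rewrite smat_mul in ea.
    have -> : X = \sum_(i < size s) a 0 i *: nth 0 s i by apply: (can_inj mxvecK).
    rewrite linear_sum mulmx_sumr; apply: summx_sub => i _.
    rewrite linearZ /= -scalemxAr; apply: scalemx_sub; apply: inv; apply: sZ; exact: mem_nth.
  case: (eqVneq U 0) => [-> | nz]; first by left; rewrite mxrank0.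
  right; apply/eqP; rewrite eqn_leq rank_leq_col /= -{1}(mxrank1 C n); apply: mxrankS.
  have [i [j uij]] : exists i j, U i j != 0.
    apply: NNPP => c; apply: (negP nz); apply/eqP/matrixP => i j; rewrite mxE.
    apply/eqP; apply: NNPP => c2; apply: c; exists i, j; exact/negP.
  apply/row_subP => l.
  have e : row i (U *m delta_mx j l) = U i j *: row l 1%:M.
    apply/rowP => m; rewrite !mxE (bigD1 j) //= big1 => [|t tj]; last first.
      by rewrite !mxE (negPf tj) mulr0.
    by rewrite mxE eqxx addr0 /= eq_sym.
  have : (U i j *: row l 1%:M <= U)%MS.
    rewrite -e; apply: submx_trans (row_sub i _) _.
    by have := span (delta_mx j l)^T; rewrite trmxK.
  by move/(scalemx_sub (U i j)^-1); rewrite scalerA mulVf // scale1r.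
Qed.

End Main.

Unset Implicit Arguments.
Unset Strict Implicit.
Theorem mainTheorem4 (C : numClosedFieldType) (n : nat) (H : 'M[C]_n -> Prop) :
  (0 < n)%N -> subgroupSL H -> irreducibleS H ->
  exists k : nat,
    [/\ num_classes (ZnPre H) k,
        (k %| n ^ 2)%N &
        (irreducibleS (ZnPre H) <-> k = (n ^ 2)%N)].
Proof. by move=> n0 sg irrH; apply: main_sec. Qed.
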